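(* Let $f:M\to\mathbb{R}^3$ be an immersion with eq\''uiaffine transversal vector field $\xi$ and positive definite induced bilinear form $h$, let $(u,v)$ be isothermal coordinates centered at an umbilical point $(0,0)$ with $\lambda_0=b_{11}(0,0)=b_{22}(0,0)\neq0$, and set $q_0=f(0,0)+\lambda_0^{-1}\xi(0,0)$. Let $k\ge1$. Then $(0,0)$ is umbilical of order $\ge k$ (i.e. the $(k-1)$-jet at $(0,0)$ of $\mathcal{B}=(b_{11}-b_{22},2b_{12})$ vanishes) if and only if $$f(u,v)+\lambda_0^{-1}\xi(u,v)=q_0+O(k+1),$$ where $O(k+1)$ denotes terms of degree at least $k+1$ in $(u,v)$.
   Context: $D$ is the flat connection of $\mathbb{R}^3$; $h$ and the shape operator $B$ are defined by $D_Xf_*Y=f_*(\nabla_XY)+h(X,Y)\xi$, $D_X\xi=-f_*(BX)+\tau(X)\xi$, eq\''uiaffine meaning $\tau=0$. Isothermal coordinates: $h(\partial_u,\partial_u)=h(\partial_v,\partial_v)=\rho$, $h(\partial_u,\partial_v)=0$. The matrix of $B$ is given by $\xi_u=-b_{11}f_u-b_{21}f_v$, $\xi_v=-b_{12}f_u-b_{22}f_v$ (with $b_{12}=b_{21}$). Umbilical: $B$ a multiple of the identity. *)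

(* Defs.v *)
From Stdlib Require Import Reals List.
From Coquelicot Require Import Coquelicot.
Open Scope R_scope.

Definition fn2 := R -> R -> R.

Definition du (g : fn2) : fn2 := fun u v => Derive (fun s => g s v) u.
Definition dv (g : fn2) : fn2 := fun u v => Derive (fun t => g u t) v.

(** Iterated partial derivative: [true] = d/du, [false] = d/dv;
    the list is applied right to left.  [length w] is the order. *)
Fixpoint dpart (w : list bool) (g : fn2) : fn2 :=
  match w with
  | nil => g
  | b :: w' => (if b then du else dv) (dpart w' g)
  end.

Definition cdisc (r u v : R) : Prop := u * u + v * v < r * r.

Definition smooth_on (r : R) (g : fn2) : Prop :=
  forall (w : list bool) (u v : R), cdisc r u v ->
    ex_derive (fun s => dpart w g s v) u /\
    ex_derive (fun t => dpart w g u t) v /\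
    continuous (fun p : R * R => dpart w g (fst p) (snd p)) (u, v).

(** Vectors of R^3 are given by their components 0,1,2. *)
Definition det3 (a b c : nat -> R) : R :=
  a 0%nat * (b 1%nat * c 2%nat - b 2%nat * c 1%nat)
  - a 1%nat * (b 0%nat * c 2%nat - b 2%nat * c 0%nat)
  + a 2%nat * (b 0%nat * c 1%nat - b 1%nat * c 0%nat).

(* Main.v *)
Require Import Defs.
From Stdlib Require Import Reals List Lra Psatz.
From Coquelicot Require Import Coquelicot.
Open Scope R_scope.
Import ListNotations.

Definition Dp (b : bool) : fn2 -> fn2 := if b then du else dv.
Definition deq (r : R) (g h : fn2) := forall u v, cdisc r u v -> g u v = h u v.
Definition P1 (g : fn2) (u v : R) :=
  ex_derive (fun s => g s v) u /\ ex_derive (fun t => g u t) v /\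
  continuous (fun p : R * R => g (fst p) (snd p)) (u, v).
Definition Pn (r : R) (n : nat) (g : fn2) :=
  forall w, (length w <= n)%nat -> forall u v, cdisc r u v -> P1 (dpart w g) u v.
Definition sm (r : R) (g : fn2) := forall n, Pn r n g.

Lemma disc_loc r u v : cdisc r u v -> locally_2d (cdisc r) u v.
Proof.
  unfold cdisc; intros H.
  set (d := r * r - (u * u + v * v)).
  set (M := 1 + Rabs u + Rabs v).
  assert (Hd : 0 < d) by (unfold d; lra).
  assert (HM : 1 <= M) by (unfold M; pose proof (Rabs_pos u); pose proof (Rabs_pos v); lra).
  set (de := Rmin 1 (d / (4 * M))).
  assert (Hde : 0 < de).
  { unfold de; apply Rmin_glb_lt; [lra|]. apply Rdiv_lt_0_compat; lra. }
  exists (mkposreal de Hde); simpl; intros x y Hx Hy.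
  assert (de <= 1) by apply Rmin_l.
  assert (de <= d / (4 * M)) by apply Rmin_r.
  assert (Hde2 : 4 * M * de <= d).
  { apply (Rmult_le_compat_l (4*M)) in H1; [|lra].
    replace (4 * M * (d / (4 * M))) with d in H1 by (field; lra). lra. }
  set (a := x - u) in *. set (b := y - v) in *.
  replace x with (u + a) by (unfold a; ring).
  replace y with (v + b) by (unfold b; ring).
  assert (Hua : u * a <= Rabs u * de).
  { apply Rle_trans with (Rabs (u * a)); [apply Rle_abs|].
    rewrite Rabs_mult. apply Rmult_le_compat_l; [apply Rabs_pos| lra]. }
  assert (Hvb : v * b <= Rabs v * de).
  { apply Rle_trans with (Rabs (v * b)); [apply Rle_abs|].
    rewrite Rabs_mult. apply Rmult_le_compat_l; [apply Rabs_pos| lra]. }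
  assert (Haa : a * a < de * de).
  { replace (a * a) with (Rabs a * Rabs a) by (rewrite <- Rabs_mult; apply Rabs_pos_eq; nra).
    pose proof (Rabs_pos a). nra. }
  assert (Hbb : b * b < de * de).
  { replace (b * b) with (Rabs b * Rabs b) by (rewrite <- Rabs_mult; apply Rabs_pos_eq; nra).
    pose proof (Rabs_pos b). nra. }
  assert (de * de <= de) by nra.
  unfold M in Hde2. unfold d in Hde2. nra.
Qed.

Lemma loc_u r u v (P : R -> Prop) : cdisc r u v -> (forall s, cdisc r s v -> P s) -> locally u P.
Proof.
  intros H HP. apply (filter_imp (fun s => cdisc r s v)); [exact HP|].
  exact (locally_2d_1d_const_y _ _ _ (disc_loc r u v H)).
Qed.
Lemma loc_v r u v (P : R -> Prop) : cdisc r u v -> (forall t, cdisc r u t -> P t) -> locally v P.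
Proof.
  intros H HP. apply (filter_imp (fun t => cdisc r u t)); [exact HP|].
  exact (locally_2d_1d_const_x _ _ _ (disc_loc r u v H)).
Qed.
Lemma loc_uv r u v (P : R * R -> Prop) : cdisc r u v ->
  (forall x y, cdisc r x y -> P (x, y)) -> locally (u, v) P.
Proof.
  intros H HP.
  apply (filter_imp (fun z : R * R => cdisc r (fst z) (snd z))).
  { intros [x y]; simpl; apply HP. }
  apply (locally_2d_locally (cdisc r) u v). exact (disc_loc r u v H).
Qed.

Lemma deq_D r b g h : deq r g h -> deq r (Dp b g) (Dp b h).
Proof.
  intros H u v Huv; destruct b; simpl; unfold du, dv; apply Derive_ext_loc.
  - apply (loc_u r u v); [exact Huv|]. intros s Hs; apply H; exact Hs.
  - apply (loc_v r u v); [exact Huv|]. intros t Ht; apply H; exact Ht.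
Qed.

Lemma deq_dpart r w g h : deq r g h -> deq r (dpart w g) (dpart w h).
Proof.
  intros H; induction w as [|b w IH]; simpl; [exact H|].
  exact (deq_D r b _ _ IH).
Qed.

Lemma deq_sym r g h : deq r g h -> deq r h g.
Proof. intros H u v Hd; symmetry; apply H; exact Hd. Qed.
Lemma deq_trans r g h k : deq r g h -> deq r h k -> deq r g k.
Proof. intros H1 H2 u v Hd; rewrite H1 by exact Hd; apply H2; exact Hd. Qed.

Lemma P1_ext r g h u v : deq r g h -> cdisc r u v -> P1 g u v -> P1 h u v.
Proof.
  intros H Hd [H1 [H2 H3]]; split; [|split].
  - apply (ex_derive_ext_loc (fun s => g s v)); [|exact H1].
    apply (loc_u r u v); [exact Hd|]. intros s Hs; apply H; exact Hs.
  - apply (ex_derive_ext_loc (fun t => g u t)); [|exact H2].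
    apply (loc_v r u v); [exact Hd|]. intros t Ht; apply H; exact Ht.
  - apply (continuous_ext_loc (fun p : R * R => h (fst p) (snd p)) (fun p : R * R => g (fst p) (snd p)) (u, v)); [|exact H3].
    apply (loc_uv r u v); [exact Hd|]. intros x y Hxy; simpl; apply H; exact Hxy.
Qed.

Lemma P1_plus g h u v : P1 g u v -> P1 h u v -> P1 (fun x y => g x y + h x y) u v.
Proof.
  intros [A1 [A2 A3]] [B1 [B2 B3]]; split; [|split].
  - exact (ex_derive_plus _ _ _ A1 B1).
  - exact (ex_derive_plus _ _ _ A2 B2).
  - exact (continuous_plus _ _ _ A3 B3).
Qed.
Lemma P1_mult g h u v : P1 g u v -> P1 h u v -> P1 (fun x y => g x y * h x y) u v.
Proof.
  intros [A1 [A2 A3]] [B1 [B2 B3]]; split; [|split].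
  - exact (ex_derive_mult _ _ _ A1 B1).
  - exact (ex_derive_mult _ _ _ A2 B2).
  - exact (continuous_mult _ _ _ A3 B3).
Qed.
Lemma P1_const c u v : P1 (fun _ _ => c) u v.
Proof.
  split; [|split].
  - apply ex_derive_const.
  - apply ex_derive_const.
  - apply continuous_const.
Qed.
Lemma P1_inv g u v : P1 g u v -> g u v <> 0 -> P1 (fun x y => / g x y) u v.
Proof.
  intros [A1 [A2 A3]] Hg; split; [|split].
  - exact (ex_derive_inv _ _ A1 Hg).
  - exact (ex_derive_inv _ _ A2 Hg).
  - exact (continuous_comp (fun p : R * R => g (fst p) (snd p)) (fun z => / z) (u, v) A3 (continuous_Rinv _ Hg)).
Qed.

Lemma D_plus b g h u v : P1 g u v -> P1 h u v ->
  Dp b (fun x y => g x y + h x y) u v = Dp b g u v + Dp b h u v.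
Proof.
  intros [A1 [A2 A3]] [B1 [B2 B3]]; destruct b; simpl; unfold du, dv.
  - exact (Derive_plus _ _ _ A1 B1).
  - exact (Derive_plus _ _ _ A2 B2).
Qed.
Lemma D_mult b g h u v : P1 g u v -> P1 h u v ->
  Dp b (fun x y => g x y * h x y) u v = Dp b g u v * h u v + g u v * Dp b h u v.
Proof.
  intros [A1 [A2 A3]] [B1 [B2 B3]]; destruct b; simpl; unfold du, dv.
  - exact (Derive_mult _ _ _ A1 B1).
  - exact (Derive_mult _ _ _ A2 B2).
Qed.
Lemma D_const b c u v : Dp b (fun _ _ => c) u v = 0.
Proof. destruct b; simpl; unfold du, dv; apply Derive_const. Qed.
Lemma D_inv b g u v : P1 g u v -> g u v <> 0 ->
  Dp b (fun x y => / g x y) u v = (-1 * Dp b g u v) * (/ g u v * / g u v).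
Proof.
  intros [A1 [A2 A3]] Hg; destruct b; simpl; unfold du, dv.
  - rewrite (Derive_inv _ _ A1 Hg). change (- Derive (fun s => g s v) u / (g u v) ^ 2 = -1 * Derive (fun s => g s v) u * (/ g u v * / g u v)). field. exact Hg.
  - rewrite (Derive_inv _ _ A2 Hg). change (- Derive (fun t => g u t) v / (g u v) ^ 2 = -1 * Derive (fun t => g u t) v * (/ g u v * / g u v)). field. exact Hg.
Qed.

Lemma dpart_app w1 w2 g : dpart (w1 ++ w2) g = dpart w1 (dpart w2 g).
Proof. induction w1 as [|b w IH]; simpl; [reflexivity| rewrite IH; reflexivity]. Qed.

Lemma dpart_snoc w b g : dpart (w ++ [b]) g = dpart w (Dp b g).
Proof. rewrite dpart_app. reflexivity. Qed.

Lemma Pn_D r n b g : Pn r (S n) g -> Pn r n (Dp b g).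
Proof.
  intros H w Hw u v Hd. rewrite <- dpart_snoc. apply H; [|exact Hd].
  rewrite length_app; simpl; lia.
Qed.

Lemma Pn_0 r n g : Pn r n g -> forall u v, cdisc r u v -> P1 g u v.
Proof. intros H u v Hd. apply (H nil); [simpl; lia| exact Hd]. Qed.

Lemma Pn_S r n g : (forall u v, cdisc r u v -> P1 g u v) ->
  (forall b, Pn r n (Dp b g)) -> Pn r (S n) g.
Proof.
  intros H0 HS w. induction w as [|b w _] using rev_ind; intros Hw u v Hd.
  - apply H0; exact Hd.
  - rewrite dpart_snoc. apply HS; [|exact Hd].
    rewrite length_app in Hw; simpl in Hw; lia.
Qed.

Lemma Pn_base r g : (forall u v, cdisc r u v -> P1 g u v) -> Pn r 0 g.
Proof.
  intros H [|b w] Hw; [exact H| simpl in Hw; lia].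
Qed.

Lemma Pn_weak r n g : Pn r (S n) g -> Pn r n g.
Proof. intros H w Hw. apply H; lia. Qed.

Lemma Pn_ext r n g h : deq r g h -> Pn r n g -> Pn r n h.
Proof.
  intros He H w Hw u v Hd. apply (P1_ext r (dpart w g)); [|exact Hd|].
  - apply deq_dpart; exact He.
  - apply H; [exact Hw|exact Hd].
Qed.

Lemma Pn_const r n : forall c, Pn r n (fun _ _ => c).
Proof.
  induction n as [|n IH]; intros c.
  - apply Pn_base; intros; apply P1_const.
  - apply Pn_S; [intros; apply P1_const|].
    intros b. apply (Pn_ext r n (fun _ _ => 0)); [|exact (IH 0)].
    intros u v _. symmetry; apply D_const.
Qed.

Lemma Pn_plus r n : forall g h, Pn r n g -> Pn r n h -> Pn r n (fun x y => g x y + h x y).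
Proof.
  induction n as [|n IH]; intros g h Hg Hh.
  - apply Pn_base; intros u v Hd. apply P1_plus. 
    + exact (Pn_0 r 0 g Hg u v Hd).
    + exact (Pn_0 r 0 h Hh u v Hd).
  - apply Pn_S.
    + intros u v Hd. apply P1_plus. 
    * exact (Pn_0 r _ g Hg u v Hd).
    * exact (Pn_0 r _ h Hh u v Hd).
    + intros b. apply (Pn_ext r n (fun x y => Dp b g x y + Dp b h x y)).
    * intros u v Hd. symmetry; apply D_plus. 
    -- exact (Pn_0 r _ g Hg u v Hd).
    -- exact (Pn_0 r _ h Hh u v Hd).
    * apply IH; apply Pn_D; assumption.
Qed.

Lemma Pn_mult r n : forall g h, Pn r n g -> Pn r n h -> Pn r n (fun x y => g x y * h x y).
Proof.
  induction n as [|n IH]; intros g h Hg Hh.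
  - apply Pn_base; intros u v Hd. apply P1_mult.
    + exact (Pn_0 r 0 g Hg u v Hd).
    + exact (Pn_0 r 0 h Hh u v Hd).
  - apply Pn_S.
    + intros u v Hd. apply P1_mult. 
    * exact (Pn_0 r _ g Hg u v Hd).
    * exact (Pn_0 r _ h Hh u v Hd).
    + intros b. apply (Pn_ext r n (fun x y => Dp b g x y * h x y + g x y * Dp b h x y)).
    * intros u v Hd. symmetry; apply D_mult.
    -- exact (Pn_0 r _ g Hg u v Hd).
    -- exact (Pn_0 r _ h Hh u v Hd).
    * apply Pn_plus; apply IH.
    -- apply Pn_D; exact Hg.
    -- apply Pn_weak; exact Hh.
    -- apply Pn_weak; exact Hg.
    -- apply Pn_D; exact Hh.
Qed.

Lemma Pn_inv r g : (forall n, Pn r n g) -> (forall u v, cdisc r u v -> g u v <> 0) ->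
  forall n, Pn r n (fun x y => / g x y).
Proof.
  intros Hg Hnz n; induction n as [|n IH].
  - apply Pn_base; intros u v Hd; apply P1_inv; [exact (Pn_0 r 0 g (Hg 0%nat) u v Hd)| apply Hnz; exact Hd].
  - apply Pn_S; [intros u v Hd; apply P1_inv; [exact (Pn_0 r 0 g (Hg 0%nat) u v Hd)| apply Hnz; exact Hd]|].
    intros b. apply (Pn_ext r n (fun x y => (-1 * Dp b g x y) * (/ g x y * / g x y))).
    + intros u v Hd. symmetry; apply D_inv; [exact (Pn_0 r 0 g (Hg 0%nat) u v Hd)| apply Hnz; exact Hd].
    + apply Pn_mult; [apply Pn_mult; [apply Pn_const| apply Pn_D; apply Hg] | apply Pn_mult; exact IH].
Qed.

Lemma sm_ext r g h : deq r g h -> sm r g -> sm r h.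
Proof. intros He H n; exact (Pn_ext r n g h He (H n)). Qed.
Lemma sm_const r c : sm r (fun _ _ => c).
Proof. intros n; apply Pn_const. Qed.
Lemma sm_plus r g h : sm r g -> sm r h -> sm r (fun x y => g x y + h x y).
Proof. intros H1 H2 n; apply Pn_plus; [apply H1|apply H2]. Qed.
Lemma sm_mult r g h : sm r g -> sm r h -> sm r (fun x y => g x y * h x y).
Proof. intros H1 H2 n; apply Pn_mult; [apply H1|apply H2]. Qed.
Lemma sm_inv r g : sm r g -> (forall u v, cdisc r u v -> g u v <> 0) -> sm r (fun x y => / g x y).
Proof. intros H1 H2 n; apply Pn_inv; [exact H1|exact H2]. Qed.
Lemma sm_D r b g : sm r g -> sm r (Dp b g).
Proof. intros H n; apply Pn_D; apply H. Qed.
Lemma sm_opp r g : sm r g -> sm r (fun x y => - g x y).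
Proof.
  intros H. apply (sm_ext r (fun x y => (-1) * g x y)); [intros u v _; ring|].
  apply sm_mult; [apply sm_const| exact H].
Qed.
Lemma sm_minus r g h : sm r g -> sm r h -> sm r (fun x y => g x y - h x y).
Proof.
  intros H1 H2. apply (sm_ext r (fun x y => g x y + - h x y)); [intros u v _; ring|].
  apply sm_plus; [exact H1| apply sm_opp; exact H2].
Qed.
Lemma sm_of r g : smooth_on r g -> sm r g.
Proof. intros H n w _ u v Hd. exact (H w u v Hd). Qed.
Lemma sm_P1 r g u v : sm r g -> cdisc r u v -> P1 g u v.
Proof. intros H Hd; exact (Pn_0 r 0 g (H 0%nat) u v Hd). Qed.
Lemma sm_to r g : sm r g -> smooth_on r g.
Proof. intros H w u v Hd. exact (H (length w) w (le_n _) u v Hd). Qed.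

Definition Vz (n : nat) (g : fn2) := forall w, (length w <= n)%nat -> dpart w g 0 0 = 0.

Lemma Vz_D n b g : Vz (S n) g -> Vz n (Dp b g).
Proof.
  intros H w Hw. rewrite <- dpart_snoc. apply H. rewrite length_app; simpl; lia.
Qed.
Lemma Vz_0 n g : Vz n g -> g 0 0 = 0.
Proof. intros H. exact (H nil (Nat.le_0_l _)). Qed.
Lemma Vz_weak n g : Vz (S n) g -> Vz n g.
Proof. intros H w Hw; apply H; lia. Qed.
Lemma Vz_S n g : g 0 0 = 0 -> (forall b, Vz n (Dp b g)) -> Vz (S n) g.
Proof.
  intros H0 HS w. induction w as [|b w _] using rev_ind; intros Hw.
  - exact H0.
  - rewrite dpart_snoc. apply HS. rewrite length_app in Hw; simpl in Hw; lia.
Qed.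
Lemma Vz_base g : g 0 0 = 0 -> Vz 0 g.
Proof. intros H [|b w] Hw; [exact H| simpl in Hw; lia]. Qed.
Lemma Vz_ext r n g h : cdisc r 0 0 -> deq r g h -> Vz n g -> Vz n h.
Proof.
  intros H0 He H w Hw. rewrite <- (deq_dpart r w g h He 0 0 H0). apply H; exact Hw.
Qed.

Lemma Vz_plus r (H0 : cdisc r 0 0) n : forall g h, sm r g -> sm r h -> Vz n g -> Vz n h ->
  Vz n (fun x y => g x y + h x y).
Proof.
  induction n as [|n IH]; intros g h Sg Sh Vg Vh.
  - apply Vz_base. rewrite (Vz_0 _ _ Vg), (Vz_0 _ _ Vh). ring.
  - apply Vz_S; [rewrite (Vz_0 _ _ Vg), (Vz_0 _ _ Vh); ring|].
    intros b. apply (Vz_ext r n (fun x y => Dp b g x y + Dp b h x y)); [exact H0| |].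
    + intros u v Hd. symmetry; apply D_plus; [exact (sm_P1 r g u v Sg Hd)|exact (sm_P1 r h u v Sh Hd)].
    + apply IH; [apply sm_D; exact Sg|apply sm_D; exact Sh|apply Vz_D; exact Vg|apply Vz_D; exact Vh].
Qed.

Lemma Vz_mult r (H0 : cdisc r 0 0) n : forall g h, sm r g -> sm r h -> Vz n g ->
  Vz n (fun x y => g x y * h x y).
Proof.
  induction n as [|n IH]; intros g h Sg Sh Vg.
  - apply Vz_base. rewrite (Vz_0 _ _ Vg). ring.
  - apply Vz_S; [rewrite (Vz_0 _ _ Vg); ring|].
    intros b. apply (Vz_ext r n (fun x y => Dp b g x y * h x y + g x y * Dp b h x y)); [exact H0| |].
    + intros u v Hd. symmetry; apply D_mult; [exact (sm_P1 r g u v Sg Hd)|exact (sm_P1 r h u v Sh Hd)].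
    + apply (Vz_plus r H0).
      * apply sm_mult; [apply sm_D; exact Sg| exact Sh].
      * apply sm_mult; [exact Sg| apply sm_D; exact Sh].
      * apply IH; [apply sm_D; exact Sg| exact Sh| apply Vz_D; exact Vg].
      * apply IH; [exact Sg| apply sm_D; exact Sh| apply Vz_weak; exact Vg].
Qed.

Definition I (r : R) (n : nat) (g : fn2) := sm r g /\ Vz n g.

Lemma I_ext r n g h : cdisc r 0 0 -> deq r g h -> I r n g -> I r n h.
Proof. intros H0 He [S V]; split; [exact (sm_ext r g h He S)| exact (Vz_ext r n g h H0 He V)]. Qed.
Lemma I_plus r n g h : cdisc r 0 0 -> I r n g -> I r n h -> I r n (fun x y => g x y + h x y).
Proof. intros H0 [S1 V1] [S2 V2]; split; [apply sm_plus; assumption| apply (Vz_plus r H0); assumption]. Qed.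
Lemma I_mult r n g h : cdisc r 0 0 -> I r n g -> sm r h -> I r n (fun x y => g x y * h x y).
Proof. intros H0 [S1 V1] S2; split; [apply sm_mult; assumption| apply (Vz_mult r H0); assumption]. Qed.
Lemma I_multl r n g h : cdisc r 0 0 -> sm r h -> I r n g -> I r n (fun x y => h x y * g x y).
Proof.
  intros H0 S2 Ig. apply (I_ext r n (fun x y => g x y * h x y)); [exact H0| intros u v _; ring|].
  apply I_mult; assumption.
Qed.
Lemma I_opp r n g : cdisc r 0 0 -> I r n g -> I r n (fun x y => - g x y).
Proof.
  intros H0 Ig. apply (I_ext r n (fun x y => (-1) * g x y)); [exact H0| intros u v _; ring|].
  apply I_multl; [exact H0| apply sm_const| exact Ig].
Qed.
Lemma I_minus r n g h : cdisc r 0 0 -> I r n g -> I r n h -> I r n (fun x y => g x y - h x y).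
Proof.
  intros H0 I1 I2. apply (I_ext r n (fun x y => g x y + - h x y)); [exact H0| intros u v _; ring|].
  apply I_plus; [exact H0| exact I1| apply I_opp; assumption].
Qed.
Lemma I_D r n b g : I r (S n) g -> I r n (Dp b g).
Proof. intros [S V]; split; [apply sm_D; exact S| apply Vz_D; exact V]. Qed.
Lemma I_weak r n g : I r (S n) g -> I r n g.
Proof. intros [S V]; split; [exact S| apply Vz_weak; exact V]. Qed.
Lemma I_S r n g : sm r g -> g 0 0 = 0 -> (forall b, I r n (Dp b g)) -> I r (S n) g.
Proof. intros S H0 H; split; [exact S| apply Vz_S; [exact H0| intros b; apply H]]. Qed.
Lemma I_base r g : sm r g -> g 0 0 = 0 -> I r 0 g.
Proof. intros S H; split; [exact S| apply Vz_base; exact H]. Qed.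

Lemma D_opp b g u v : Dp b (fun x y => - g x y) u v = - Dp b g u v.
Proof. destruct b; simpl; unfold du, dv; apply Derive_opp. Qed.

Lemma D_csub b c g u v : P1 g u v -> Dp b (fun x y => c - g x y) u v = - Dp b g u v.
Proof.
  intros [A1 [A2 _]]; destruct b; simpl; unfold du, dv.
  - rewrite (Derive_minus (fun _ => c) (fun s => g s v) u (ex_derive_const _ _) A1), Derive_const.
    change (0 - Derive (fun s => g s v) u = - Derive (fun s => g s v) u); ring.
  - rewrite (Derive_minus (fun _ => c) (fun t => g u t) v (ex_derive_const _ _) A2), Derive_const.
    change (0 - Derive (fun t => g u t) v = - Derive (fun t => g u t) v); ring.
Qed.

Lemma D_sub b g h u v : P1 g u v -> P1 h u v ->
  Dp b (fun x y => g x y - h x y) u v = Dp b g u v - Dp b h u v.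
Proof.
  intros [A1 [A2 _]] [B1 [B2 _]]; destruct b; simpl; unfold du, dv.
  - exact (Derive_minus _ _ _ A1 B1).
  - exact (Derive_minus _ _ _ A2 B2).
Qed.

Lemma D_F b g h c K u v : P1 g u v -> P1 h u v ->
  Dp b (fun x y => g x y + c * h x y - K) u v = Dp b g u v + c * Dp b h u v.
Proof.
  intros [A1 [A2 _]] [B1 [B2 _]]; destruct b; simpl; unfold du, dv.
  - assert (E1 : ex_derive (fun s => c * h s v) u) by exact (ex_derive_scal _ c _ B1).
    assert (E2 : ex_derive (fun s => g s v + c * h s v) u) by exact (ex_derive_plus _ _ _ A1 E1).
    rewrite (Derive_minus (fun s => g s v + c * h s v) (fun _ => K) u E2 (ex_derive_const _ _)).
    change (Derive (fun s => g s v + c * h s v) u - Derive (fun _ => K) u =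
      Derive (fun s => g s v) u + c * Derive (fun s => h s v) u).
    rewrite (Derive_plus (fun s => g s v) (fun s => c * h s v) u A1 E1).
    change (Derive (fun s => g s v) u + Derive (fun s => c * h s v) u - Derive (fun _ => K) u =
      Derive (fun s => g s v) u + c * Derive (fun s => h s v) u).
    rewrite Derive_scal, Derive_const. ring.
  - assert (E1 : ex_derive (fun t => c * h u t) v) by exact (ex_derive_scal _ c _ B2).
    assert (E2 : ex_derive (fun t => g u t + c * h u t) v) by exact (ex_derive_plus _ _ _ A2 E1).
    rewrite (Derive_minus (fun t => g u t + c * h u t) (fun _ => K) v E2 (ex_derive_const _ _)).
    change (Derive (fun t => g u t + c * h u t) v - Derive (fun _ => K) v =
      Derive (fun t => g u t) v + c * Derive (fun t => h u t) v).
    rewrite (Derive_plus (fun t => g u t) (fun t => c * h u t) v A2 E1).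
    change (Derive (fun t => g u t) v + Derive (fun t => c * h u t) v - Derive (fun _ => K) v =
      Derive (fun t => g u t) v + c * Derive (fun t => h u t) v).
    rewrite Derive_scal, Derive_const. rewrite Rminus_0_r; reflexivity.
Qed.

Lemma D_lin2 b g1 h1 g2 h2 u v : P1 g1 u v -> P1 h1 u v -> P1 g2 u v -> P1 h2 u v ->
  Dp b (fun x y => g1 x y * h1 x y + g2 x y * h2 x y) u v =
  (Dp b g1 u v * h1 u v + g1 u v * Dp b h1 u v) + (Dp b g2 u v * h2 u v + g2 u v * Dp b h2 u v).
Proof.
  intros P1a P1b P1c P1d.
  rewrite (D_plus b (fun x y => g1 x y * h1 x y) (fun x y => g2 x y * h2 x y)).
  - rewrite (D_mult b g1 h1), (D_mult b g2 h2) by assumption. reflexivity.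
  - apply P1_mult; assumption.
  - apply P1_mult; assumption.
Qed.

Lemma schwarz_sm r g u v : sm r g -> cdisc r u v -> du (dv g) u v = dv (du g) u v.
Proof.
  intros S Hd. unfold du, dv.
  apply Schwarz.
  - apply locally_2d_impl with (P := cdisc r); [|exact (disc_loc r u v Hd)].
    apply locally_2d_forall. intros x y Hxy.
    destruct (sm_P1 r g x y S Hxy) as [A1 [A2 _]].
    destruct (sm_P1 r (dv g) x y (sm_D r false g S) Hxy) as [B1 _].
    destruct (sm_P1 r (du g) x y (sm_D r true g S) Hxy) as [_ [C2 _]].
    split; [exact A1|split; [exact A2| split; [exact B1| exact C2]]].
  - apply continuity_2d_pt_filterlim.
    destruct (sm_P1 r (du (dv g)) u v (sm_D r true _ (sm_D r false g S)) Hd) as [_ [_ C]].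
    exact C.
  - apply continuity_2d_pt_filterlim.
    destruct (sm_P1 r (dv (du g)) u v (sm_D r false _ (sm_D r true g S)) Hd) as [_ [_ C]].
    exact C.
Qed.

Lemma coef_eq (a b x : nat -> R) a1 b1 c1 a2 b2 c2 :
  det3 a b x <> 0 ->
  (forall i, (i < 3)%nat -> a1 * a i + b1 * b i + c1 * x i = a2 * a i + b2 * b i + c2 * x i) ->
  a1 = a2 /\ b1 = b2.
Proof.
  intros Hd H.
  pose proof (H 0%nat ltac:(lia)) as E0.
  pose proof (H 1%nat ltac:(lia)) as E1.
  pose proof (H 2%nat ltac:(lia)) as E2.
  assert (Ea : (a1 - a2) * det3 a b x = 0).
  { assert (Z : (a1 - a2) * det3 a b x =
       det3 (fun i => (a1 - a2) * a i + (b1 - b2) * b i + (c1 - c2) * x i) b x)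
      by (unfold det3; ring).
    rewrite Z. unfold det3.
    replace ((a1 - a2) * a 0%nat + (b1 - b2) * b 0%nat + (c1 - c2) * x 0%nat) with 0 by lra.
    replace ((a1 - a2) * a 1%nat + (b1 - b2) * b 1%nat + (c1 - c2) * x 1%nat) with 0 by lra.
    replace ((a1 - a2) * a 2%nat + (b1 - b2) * b 2%nat + (c1 - c2) * x 2%nat) with 0 by lra.
    ring. }
  assert (Eb : (b1 - b2) * det3 a b x = 0).
  { assert (Z : (b1 - b2) * det3 a b x =
       det3 a (fun i => (a1 - a2) * a i + (b1 - b2) * b i + (c1 - c2) * x i) x)
      by (unfold det3; ring).
    rewrite Z. unfold det3.
    replace ((a1 - a2) * a 0%nat + (b1 - b2) * b 0%nat + (c1 - c2) * x 0%nat) with 0 by lra.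
    replace ((a1 - a2) * a 1%nat + (b1 - b2) * b 1%nat + (c1 - c2) * x 1%nat) with 0 by lra.
    replace ((a1 - a2) * a 2%nat + (b1 - b2) * b 2%nat + (c1 - c2) * x 2%nat) with 0 by lra.
    ring. }
  split.
  - destruct (Rmult_integral _ _ Ea) as [h|h]; [lra| contradiction].
  - destruct (Rmult_integral _ _ Eb) as [h|h]; [lra| contradiction].
Qed.

Ltac smt := repeat match goal with
 | |- sm _ (fun x y => @?a x y + @?b x y) => apply sm_plus
 | |- sm _ (fun x y => @?a x y - @?b x y) => apply sm_minus
 | |- sm _ (fun x y => @?a x y * @?b x y) => apply sm_mult
 | |- sm _ (fun x y => - @?a x y) => apply sm_opp
 | |- sm _ (fun _ _ => ?c) => apply sm_const
 end.

Lemma sm_det3 r (Y Z W : nat -> fn2) :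
  (forall i, (i < 3)%nat -> sm r (Y i)) -> (forall i, (i < 3)%nat -> sm r (Z i)) ->
  (forall i, (i < 3)%nat -> sm r (W i)) ->
  sm r (fun u v => det3 (fun i => Y i u v) (fun i => Z i u v) (fun i => W i u v)).
Proof.
  intros HY HZ HW. unfold det3. smt;
  match goal with |- sm _ (Y _) => apply HY | |- sm _ (Z _) => apply HZ | |- sm _ (W _) => apply HW end; lia.
Qed.

Lemma I_det3_1 r n (Y Z W : nat -> fn2) : cdisc r 0 0 ->
  (forall i, (i < 3)%nat -> I r n (Y i)) -> (forall i, (i < 3)%nat -> sm r (Z i)) ->
  (forall i, (i < 3)%nat -> sm r (W i)) ->
  I r n (fun u v => det3 (fun i => Y i u v) (fun i => Z i u v) (fun i => W i u v)).
Proof.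
  intros H0 HY HZ HW. unfold det3.
  apply I_plus; [exact H0| apply I_minus; [exact H0| |] |];
  apply I_mult; try exact H0;
  match goal with |- I _ _ (Y _) => apply HY; lia | _ => idtac end; smt;
  match goal with |- sm _ (Z _) => apply HZ | |- sm _ (W _) => apply HW end; lia.
Qed.

Lemma I_det3_2 r n (Y Z W : nat -> fn2) : cdisc r 0 0 ->
  (forall i, (i < 3)%nat -> I r n (Y i)) -> (forall i, (i < 3)%nat -> sm r (Z i)) ->
  (forall i, (i < 3)%nat -> sm r (W i)) ->
  I r n (fun u v => det3 (fun i => Z i u v) (fun i => Y i u v) (fun i => W i u v)).
Proof.
  intros H0 HY HZ HW.
  apply (I_ext r n (fun u v => - det3 (fun i => Y i u v) (fun i => Z i u v) (fun i => W i u v)));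
    [exact H0| intros u v _; cbv beta; unfold det3; ring|].
  apply I_opp; [exact H0|]. apply I_det3_1; assumption.
Qed.

Lemma cramer_sm r (A B X Y : nat -> fn2) (al be ga : fn2) :
  (forall i, (i < 3)%nat -> sm r (A i)) -> (forall i, (i < 3)%nat -> sm r (B i)) ->
  (forall i, (i < 3)%nat -> sm r (X i)) -> (forall i, (i < 3)%nat -> sm r (Y i)) ->
  (forall u v, cdisc r u v -> det3 (fun i => A i u v) (fun i => B i u v) (fun i => X i u v) <> 0) ->
  (forall u v, cdisc r u v -> forall i, (i < 3)%nat ->
     Y i u v = al u v * A i u v + be u v * B i u v + ga u v * X i u v) ->
  sm r al /\ sm r be /\ sm r ga.
Proof.
  intros HA HB HX HY Hdet HE.
  set (Dt := fun u v => det3 (fun i => A i u v) (fun i => B i u v) (fun i => X i u v)).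
  assert (SI : sm r (fun u v => / Dt u v)).
  { apply sm_inv; [apply sm_det3; assumption| exact Hdet]. }
  split; [|split].
  - apply (sm_ext r (fun u v => det3 (fun i => Y i u v) (fun i => B i u v) (fun i => X i u v) * / Dt u v)).
    + intros u v Hd. pose proof (Hdet u v Hd) as Hn. fold (Dt u v) in Hn. unfold Dt in *.
      unfold det3 at 1. rewrite !(HE u v Hd) by lia. field_simplify; [|exact Hn].
      unfold det3 in *. field. exact Hn.
    + apply sm_mult; [apply sm_det3; assumption| exact SI].
  - apply (sm_ext r (fun u v => det3 (fun i => A i u v) (fun i => Y i u v) (fun i => X i u v) * / Dt u v)).
    + intros u v Hd. pose proof (Hdet u v Hd) as Hn. unfold Dt in *.
      unfold det3 at 1. rewrite !(HE u v Hd) by lia.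
      unfold det3 in *. field. exact Hn.
    + apply sm_mult; [apply sm_det3; assumption| exact SI].
  - apply (sm_ext r (fun u v => det3 (fun i => A i u v) (fun i => B i u v) (fun i => Y i u v) * / Dt u v)).
    + intros u v Hd. pose proof (Hdet u v Hd) as Hn. unfold Dt in *.
      unfold det3 at 1. rewrite !(HE u v Hd) by lia.
      unfold det3 in *. field. exact Hn.
    + apply sm_mult; [apply sm_det3; assumption| exact SI].
Qed.

Ltac Ip H0 := repeat match goal with
 | |- I _ _ (fun x y => @?a x y + @?b x y) => apply I_plus; [exact H0| |]
 end.

Theorem lemma4p3
  (r : R) (f xi : nat -> fn2)
  (rho b11 b12 b22 : fn2)
  (G1uu G2uu G1uv G2uv G1vv G2vv : fn2)
  (lambda0 : R) (k : nat)
  (Hr : 0 < r)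
  (Hf_smooth : forall i, (i < 3)%nat -> smooth_on r (f i))
  (Hxi_smooth : forall i, (i < 3)%nat -> smooth_on r (xi i))
  (* f is an immersion and xi is transversal *)
  (Htrans : forall u v, cdisc r u v ->
     det3 (fun i => du (f i) u v) (fun i => dv (f i) u v)
          (fun i => xi i u v) <> 0)
  (* Gauss formula in isothermal coordinates: h11 = h22 = rho > 0, h12 = 0 *)
  (Hrho : forall u v, cdisc r u v -> 0 < rho u v)
  (Huu : forall u v, cdisc r u v -> forall i, (i < 3)%nat ->
     du (du (f i)) u v = G1uu u v * du (f i) u v + G2uu u v * dv (f i) u v
                         + rho u v * xi i u v)
  (Huv : forall u v, cdisc r u v -> forall i, (i < 3)%nat ->
     dv (du (f i)) u v = G1uv u v * du (f i) u v + G2uv u v * dv (f i) u v)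
  (Hvv : forall u v, cdisc r u v -> forall i, (i < 3)%nat ->
     dv (dv (f i)) u v = G1vv u v * du (f i) u v + G2vv u v * dv (f i) u v
                         + rho u v * xi i u v)
  (* Weingarten formula, equiaffine (tau = 0), shape operator (b_ij), b12 = b21 *)
  (Hxu : forall u v, cdisc r u v -> forall i, (i < 3)%nat ->
     du (xi i) u v = - b11 u v * du (f i) u v - b12 u v * dv (f i) u v)
  (Hxv : forall u v, cdisc r u v -> forall i, (i < 3)%nat ->
     dv (xi i) u v = - b12 u v * du (f i) u v - b22 u v * dv (f i) u v)
  (* (0,0) is umbilical with lambda0 = b11(0,0) = b22(0,0) <> 0 *)
  (Hb11 : b11 0 0 = lambda0) (Hb22 : b22 0 0 = lambda0) (Hb12 : b12 0 0 = 0)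
  (Hl0 : lambda0 <> 0)
  (Hk : (1 <= k)%nat) :
  (forall w : list bool, (length w <= k - 1)%nat ->
      dpart w (fun u v => b11 u v - b22 u v) 0 0 = 0 /\
      dpart w (fun u v => 2 * b12 u v) 0 0 = 0)
  <->
  (forall i, (i < 3)%nat -> forall w : list bool, (length w <= k)%nat ->
      dpart w (fun u v => f i u v + / lambda0 * xi i u v
                          - (f i 0 0 + / lambda0 * xi i 0 0)) 0 0 = 0).
Proof.
  assert (H0 : cdisc r 0 0) by (unfold cdisc; nra).
  assert (Sf : forall i, (i < 3)%nat -> sm r (f i)) by (intros i Hi; apply sm_of; apply Hf_smooth; exact Hi).
  assert (SX : forall i, (i < 3)%nat -> sm r (xi i)) by (intros i Hi; apply sm_of; apply Hxi_smooth; exact Hi).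
  assert (SA : forall i, (i < 3)%nat -> sm r (du (f i))) by (intros i Hi; exact (sm_D r true _ (Sf i Hi))).
  assert (SB : forall i, (i < 3)%nat -> sm r (dv (f i))) by (intros i Hi; exact (sm_D r false _ (Sf i Hi))).
  assert (SXu : forall i, (i < 3)%nat -> sm r (du (xi i))) by (intros i Hi; exact (sm_D r true _ (SX i Hi))).
  assert (SXv : forall i, (i < 3)%nat -> sm r (dv (xi i))) by (intros i Hi; exact (sm_D r false _ (SX i Hi))).
  assert (SAu : forall i, (i < 3)%nat -> sm r (du (du (f i)))) by (intros i Hi; exact (sm_D r true _ (SA i Hi))).
  assert (SAv : forall i, (i < 3)%nat -> sm r (dv (du (f i)))) by (intros i Hi; exact (sm_D r false _ (SA i Hi))).
  assert (SBv : forall i, (i < 3)%nat -> sm r (dv (dv (f i)))) by (intros i Hi; exact (sm_D r false _ (SB i Hi))).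
  assert (Hdet : forall u v, cdisc r u v ->
    det3 (fun i => (fun i => du (f i)) i u v) (fun i => (fun i => dv (f i)) i u v) (fun i => xi i u v) <> 0)
    by exact Htrans.
  assert (Sneg : forall g, sm r (fun x y => - g x y) -> sm r g).
  { intros g Sg. apply (sm_ext r (fun x y => - - g x y)); [intros x y _; ring| apply sm_opp; exact Sg]. }
  destruct (cramer_sm r (fun i => du (f i)) (fun i => dv (f i)) xi (fun i => du (xi i))
     (fun x y => - b11 x y) (fun x y => - b12 x y) (fun _ _ => 0) SA SB SX SXu Hdet) as [Sb11 [Sb12 _]].
  { intros u v Hd i Hi. rewrite (Hxu u v Hd i Hi). ring. }
  apply Sneg in Sb11. apply Sneg in Sb12.
  destruct (cramer_sm r (fun i => du (f i)) (fun i => dv (f i)) xi (fun i => dv (xi i))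
     (fun x y => - b12 x y) (fun x y => - b22 x y) (fun _ _ => 0) SA SB SX SXv Hdet) as [_ [Sb22 _]].
  { intros u v Hd i Hi. rewrite (Hxv u v Hd i Hi). ring. }
  apply Sneg in Sb22.
  destruct (cramer_sm r (fun i => du (f i)) (fun i => dv (f i)) xi (fun i => du (du (f i)))
     G1uu G2uu rho SA SB SX SAu Hdet) as [SG1uu [SG2uu _]].
  { intros u v Hd i Hi. rewrite (Huu u v Hd i Hi). ring. }
  destruct (cramer_sm r (fun i => du (f i)) (fun i => dv (f i)) xi (fun i => dv (du (f i)))
     G1uv G2uv (fun _ _ => 0) SA SB SX SAv Hdet) as [SG1uv [SG2uv _]].
  { intros u v Hd i Hi. rewrite (Huv u v Hd i Hi). ring. }
  destruct (cramer_sm r (fun i => du (f i)) (fun i => dv (f i)) xi (fun i => dv (dv (f i)))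
     G1vv G2vv rho SA SB SX SBv Hdet) as [SG1vv [SG2vv _]].
  { intros u v Hd i Hi. rewrite (Hvv u v Hd i Hi). ring. }
  assert (DpT : forall g x y, Dp true g x y = du g x y) by reflexivity.
  assert (DpF : forall g x y, Dp false g x y = dv g x y) by reflexivity.
  (* Codazzi *)
  assert (Cod : forall u v, cdisc r u v ->
    dv b11 u v = du b12 u v + (b22 u v - b11 u v) * G1uv u v + b12 u v * (G1uu u v - G1vv u v) /\
    du b22 u v = dv b12 u v + (b11 u v - b22 u v) * G2uv u v + b12 u v * (G2vv u v - G2uu u v)).
  { intros u v Hd.
    assert (E : forall i, (i < 3)%nat ->
      (- dv b11 u v - b11 u v * G1uv u v - b12 u v * G1vv u v) * du (f i) u v
      + (- b11 u v * G2uv u v - dv b12 u v - b12 u v * G2vv u v) * dv (f i) u v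
      + (- b12 u v * rho u v) * xi i u v =
      (- du b12 u v - b12 u v * G1uu u v - b22 u v * G1uv u v) * du (f i) u v
      + (- b12 u v * G2uu u v - du b22 u v - b22 u v * G2uv u v) * dv (f i) u v
      + (- b12 u v * rho u v) * xi i u v).
    { intros i Hi.
      assert (L : dv (du (xi i)) u v =
        Dp false (fun x y => (fun x y => - b11 x y) x y * du (f i) x y + (fun x y => - b12 x y) x y * dv (f i) x y) u v).
      { apply (deq_D r false (du (xi i))); [|exact Hd].
        intros x y Hxy. rewrite (Hxu x y Hxy i Hi). ring. }
      rewrite (D_lin2 false (fun x y => - b11 x y) (du (f i)) (fun x y => - b12 x y) (dv (f i))) in L;
        [| apply (sm_P1 r); [apply sm_opp; exact Sb11| exact Hd]
         | apply (sm_P1 r); [apply SA; exact Hi| exact Hd]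
         | apply (sm_P1 r); [apply sm_opp; exact Sb12| exact Hd]
         | apply (sm_P1 r); [apply SB; exact Hi| exact Hd]].
      rewrite !D_opp in L. cbn [Dp] in L.
      rewrite (Huv u v Hd i Hi), (Hvv u v Hd i Hi) in L.
      assert (R : du (dv (xi i)) u v =
        Dp true (fun x y => (fun x y => - b12 x y) x y * du (f i) x y + (fun x y => - b22 x y) x y * dv (f i) x y) u v).
      { apply (deq_D r true (dv (xi i))); [|exact Hd].
        intros x y Hxy. rewrite (Hxv x y Hxy i Hi). ring. }
      rewrite (D_lin2 true (fun x y => - b12 x y) (du (f i)) (fun x y => - b22 x y) (dv (f i))) in R;
        [| apply (sm_P1 r); [apply sm_opp; exact Sb12| exact Hd]
         | apply (sm_P1 r); [apply SA; exact Hi| exact Hd]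
         | apply (sm_P1 r); [apply sm_opp; exact Sb22| exact Hd]
         | apply (sm_P1 r); [apply SB; exact Hi| exact Hd]].
      rewrite !D_opp in R. cbn [Dp] in R.
      rewrite (schwarz_sm r (f i) u v (Sf i Hi) Hd) in R.
      rewrite (Huu u v Hd i Hi), (Huv u v Hd i Hi) in R.
      rewrite (schwarz_sm r (xi i) u v (SX i Hi) Hd) in R.
      rewrite L in R. lra. }
    destruct (coef_eq _ _ _ _ _ _ _ _ _ (Htrans u v Hd) E) as [E1 E2].
    split; lra. }


  destruct k as [|n]; [lia|]. replace (S n - 1)%nat with n by lia. clear Hk.
  set (M := fun x y => b11 x y - b22 x y).
  set (P := fun x y => lambda0 - b11 x y).
  set (Q := fun x y => lambda0 - b22 x y).
  set (Fi := fun i => fun u v => f i u v + / lambda0 * xi i u v - (f i 0 0 + / lambda0 * xi i 0 0)).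
  assert (SF : forall i, (i < 3)%nat -> sm r (Fi i)).
  { intros i Hi. unfold Fi. apply sm_minus; [apply sm_plus; [exact (Sf i Hi)| apply sm_mult; [apply sm_const| exact (SX i Hi)]]| apply sm_const]. }
  assert (SM : sm r M) by (apply sm_minus; assumption).
  assert (SP : sm r P) by (apply sm_minus; [apply sm_const| assumption]).
  assert (SQ : sm r Q) by (apply sm_minus; [apply sm_const| assumption]).
  assert (DFt : forall i, (i < 3)%nat -> deq r (fun x y => / lambda0 * (P x y * du (f i) x y - b12 x y * dv (f i) x y)) (du (Fi i))).
  { intros i Hi x y Hxy. unfold Fi.
    change (du (fun u v => f i u v + / lambda0 * xi i u v - (f i 0 0 + / lambda0 * xi i 0 0)) x y)
      with (Dp true (fun u v => f i u v + / lambda0 * xi i u v - (f i 0 0 + / lambda0 * xi i 0 0)) x y).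
    rewrite (D_F true (f i) (xi i)); [| apply (sm_P1 r); [exact (Sf i Hi)| exact Hxy] | apply (sm_P1 r); [exact (SX i Hi)| exact Hxy]].
    cbn [Dp]. rewrite (Hxu x y Hxy i Hi). unfold P. field. exact Hl0. }
  assert (DFf : forall i, (i < 3)%nat -> deq r (fun x y => / lambda0 * (Q x y * dv (f i) x y - b12 x y * du (f i) x y)) (dv (Fi i))).
  { intros i Hi x y Hxy. unfold Fi.
    change (dv (fun u v => f i u v + / lambda0 * xi i u v - (f i 0 0 + / lambda0 * xi i 0 0)) x y)
      with (Dp false (fun u v => f i u v + / lambda0 * xi i u v - (f i 0 0 + / lambda0 * xi i 0 0)) x y).
    rewrite (D_F false (f i) (xi i)); [| apply (sm_P1 r); [exact (Sf i Hi)| exact Hxy] | apply (sm_P1 r); [exact (SX i Hi)| exact Hxy]].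
    cbn [Dp]. rewrite (Hxv x y Hxy i Hi). unfold Q. field. exact Hl0. }
  split.
  - intros Hyp.
    assert (IM : I r n M) by (split; [exact SM| intros w Hw; exact (proj1 (Hyp w Hw))]).
    assert (I2 : I r n (fun x y => 2 * b12 x y)).
    { split; [apply sm_mult; [apply sm_const| exact Sb12]| intros w Hw; exact (proj2 (Hyp w Hw))]. }
    assert (Ib12 : I r n b12).
    { apply (I_ext r n (fun x y => / 2 * (2 * b12 x y))); [exact H0| intros x y _; field|].
      apply I_multl; [exact H0| apply sm_const| exact I2]. }
    assert (IPQ : I r n P /\ I r n Q).
    { destruct n as [|m].
      - split; apply I_base; try assumption.
        + unfold P; rewrite Hb11; ring.
        + unfold Q; rewrite Hb22; ring.
      - split; apply I_S; try assumption; try (unfold P, Q; rewrite ?Hb11, ?Hb22; ring);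
          intros b; destruct b.
        +
          apply (I_ext r m (fun x y => -(Dp true M x y + Dp false b12 x y + M x y * G2uv x y + b12 x y * (G2vv x y - G2uu x y)))); [exact H0| |].
          * intros x y Hxy. unfold P, M.
            rewrite (D_csub true lambda0 b11 x y (sm_P1 r b11 x y Sb11 Hxy)).
            rewrite (D_sub true b11 b22 x y (sm_P1 r b11 x y Sb11 Hxy) (sm_P1 r b22 x y Sb22 Hxy)).
            cbn [Dp]. destruct (Cod x y Hxy) as [C1 C2]. rewrite C2. ring.
          * apply I_opp; [exact H0|]. Ip H0.
            -- apply I_D; exact IM.
            -- apply I_D; exact Ib12.
            -- apply I_mult; [exact H0| apply I_weak; exact IM| exact SG2uv].
            -- apply I_mult; [exact H0| apply I_weak; exact Ib12| apply sm_minus; assumption].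
        +
          apply (I_ext r m (fun x y => -(Dp true b12 x y + (- M x y) * G1uv x y + b12 x y * (G1uu x y - G1vv x y)))); [exact H0| |].
          * intros x y Hxy. unfold P, M.
            rewrite (D_csub false lambda0 b11 x y (sm_P1 r b11 x y Sb11 Hxy)).
            cbn [Dp]. destruct (Cod x y Hxy) as [C1 C2]. rewrite C1. ring.
          * apply I_opp; [exact H0|]. Ip H0.
            -- apply I_D; exact Ib12.
            -- apply I_mult; [exact H0| apply I_opp; [exact H0| apply I_weak; exact IM]| exact SG1uv].
            -- apply I_mult; [exact H0| apply I_weak; exact Ib12| apply sm_minus; assumption].
        +
          apply (I_ext r m (fun x y => -(Dp false b12 x y + M x y * G2uv x y + b12 x y * (G2vv x y - G2uu x y)))); [exact H0| |].
          * intros x y Hxy. unfold Q, M.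
            rewrite (D_csub true lambda0 b22 x y (sm_P1 r b22 x y Sb22 Hxy)).
            cbn [Dp]. destruct (Cod x y Hxy) as [C1 C2]. rewrite C2. ring.
          * apply I_opp; [exact H0|]. Ip H0.
            -- apply I_D; exact Ib12.
            -- apply I_mult; [exact H0| apply I_weak; exact IM| exact SG2uv].
            -- apply I_mult; [exact H0| apply I_weak; exact Ib12| apply sm_minus; assumption].
        +
          apply (I_ext r m (fun x y => -(Dp true b12 x y + (- M x y) * G1uv x y + b12 x y * (G1uu x y - G1vv x y) - Dp false M x y))); [exact H0| |].
          * intros x y Hxy. unfold Q, M.
            rewrite (D_csub false lambda0 b22 x y (sm_P1 r b22 x y Sb22 Hxy)).
            rewrite (D_sub false b11 b22 x y (sm_P1 r b11 x y Sb11 Hxy) (sm_P1 r b22 x y Sb22 Hxy)).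
            cbn [Dp]. destruct (Cod x y Hxy) as [C1 C2]. rewrite C1. ring.
          * apply I_opp; [exact H0|]. apply I_minus; [exact H0| |].
            -- Ip H0.
               ++ apply I_D; exact Ib12.
               ++ apply I_mult; [exact H0| apply I_opp; [exact H0| apply I_weak; exact IM]| exact SG1uv].
               ++ apply I_mult; [exact H0| apply I_weak; exact Ib12| apply sm_minus; assumption].
            -- apply I_D; exact IM. }
    destruct IPQ as [IP IQ].
    intros i Hi.
    assert (IF : I r (S n) (Fi i)).
    { apply I_S; [exact (SF i Hi)| unfold Fi; ring|].
      intros b; destruct b.
      - apply (I_ext r n _ _ H0 (DFt i Hi)).
        apply I_multl; [exact H0| apply sm_const|]. apply I_minus; [exact H0| |].
        + apply I_mult; [exact H0| exact IP| exact (SA i Hi)].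
        + apply I_mult; [exact H0| exact Ib12| exact (SB i Hi)].
      - apply (I_ext r n _ _ H0 (DFf i Hi)).
        apply I_multl; [exact H0| apply sm_const|]. apply I_minus; [exact H0| |].
        + apply I_mult; [exact H0| exact IQ| exact (SB i Hi)].
        + apply I_mult; [exact H0| exact Ib12| exact (SA i Hi)]. }
    exact (proj2 IF).


  - intros Hyp.
    assert (IF : forall i, (i < 3)%nat -> I r (S n) (Fi i)).
    { intros i Hi. split; [exact (SF i Hi)| exact (Hyp i Hi)]. }
    assert (IU : forall i, (i < 3)%nat -> I r n (du (Fi i))).
    { intros i Hi. exact (I_D r n true (Fi i) (IF i Hi)). }
    assert (IV : forall i, (i < 3)%nat -> I r n (dv (Fi i))).
    { intros i Hi. exact (I_D r n false (Fi i) (IF i Hi)). }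
    set (Dt := fun x y => det3 (fun i => du (f i) x y) (fun i => dv (f i) x y) (fun i => xi i x y)).
    assert (SDi : sm r (fun x y => / Dt x y)).
    { apply sm_inv; [apply sm_det3; assumption| exact Htrans]. }
    assert (IP : I r n P).
    { apply (I_ext r n (fun x y => det3 (fun i => du (Fi i) x y) (fun i => dv (f i) x y) (fun i => xi i x y) * (lambda0 * / Dt x y))); [exact H0| |].
      - intros x y Hxy. pose proof (Htrans x y Hxy) as Hn.
        unfold Dt. unfold det3 in *. cbv beta in *.
        rewrite <- (DFt 0%nat ltac:(lia) x y Hxy), <- (DFt 1%nat ltac:(lia) x y Hxy), <- (DFt 2%nat ltac:(lia) x y Hxy).
        cbv beta. unfold P. field. split; [exact Hn| exact Hl0].
      - apply I_mult; [exact H0| apply (I_det3_1 r n (fun i => du (Fi i)) (fun i => dv (f i)) xi H0 IU SB SX)|].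
        apply sm_mult; [apply sm_const| exact SDi]. }
    assert (IQ : I r n Q).
    { apply (I_ext r n (fun x y => det3 (fun i => du (f i) x y) (fun i => dv (Fi i) x y) (fun i => xi i x y) * (lambda0 * / Dt x y))); [exact H0| |].
      - intros x y Hxy. pose proof (Htrans x y Hxy) as Hn.
        unfold Dt. unfold det3 in *. cbv beta in *.
        rewrite <- (DFf 0%nat ltac:(lia) x y Hxy), <- (DFf 1%nat ltac:(lia) x y Hxy), <- (DFf 2%nat ltac:(lia) x y Hxy).
        cbv beta. unfold Q. field. split; [exact Hn| exact Hl0].
      - apply I_mult; [exact H0| apply (I_det3_2 r n (fun i => dv (Fi i)) (fun i => du (f i)) xi H0 IV SA SX)|].
        apply sm_mult; [apply sm_const| exact SDi]. }
    assert (Ib12 : I r n b12).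
    { apply (I_ext r n (fun x y => det3 (fun i => du (f i) x y) (fun i => du (Fi i) x y) (fun i => xi i x y) * (- lambda0 * / Dt x y))); [exact H0| |].
      - intros x y Hxy. pose proof (Htrans x y Hxy) as Hn.
        unfold Dt. unfold det3 in *. cbv beta in *.
        rewrite <- (DFt 0%nat ltac:(lia) x y Hxy), <- (DFt 1%nat ltac:(lia) x y Hxy), <- (DFt 2%nat ltac:(lia) x y Hxy).
        cbv beta. field. split; [exact Hn| exact Hl0].
      - apply I_mult; [exact H0| apply (I_det3_2 r n (fun i => du (Fi i)) (fun i => du (f i)) xi H0 IU SA SX)|].
        apply sm_mult; [apply sm_const| exact SDi]. }
    assert (IM : I r n M).
    { apply (I_ext r n (fun x y => Q x y - P x y)); [exact H0| intros x y _; unfold P, Q, M; ring|].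
      apply I_minus; [exact H0| exact IQ| exact IP]. }
    assert (I2 : I r n (fun x y => 2 * b12 x y)).
    { apply I_multl; [exact H0| apply sm_const| exact Ib12]. }
    intros w Hw. split; [exact (proj2 IM w Hw)| exact (proj2 I2 w Hw)].
Qed.
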